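(* There is an absolute constant $\alpha$ such that for every rule $\mathcal{R}$, every finite $X\subseteq\mathbb{R}^d$, all $k\ge2,\ell\ge1$, and every optimal cluster $K$, when general $k$-means++ with rule $\mathcal{R}$ is run on $X$ with parameters $k,\ell$, we have $\mathbb{E}[\mathrm{HIT}(K)]\le\alpha\,\ell\,k^{1-1/\ell}$.
   Context: $\phi(x,C)=\min_{c\in C}\|x-c\|_2^2$ ($\phi(x,\emptyset)=\infty$), $\phi(Y,C)=\sum_{x\in Y}\phi(x,C)$. A rule $\mathcal{R}$ selects one of $\ell$ given candidate points (given access to $X$, current centers, $k$, $\ell$). General $k$-means++ with rule $\mathcal{R}$: $C_0=\emptyset$; sample $c_1^1,\dots,c_1^\ell$ independently uniformly from $X$, $\mathcal{R}$ selects $c_1$ among them, $C_1=\{c_1\}$; for $i=1,\dots,k-1$ sample $c_{i+1}^1,\dots,c_{i+1}^\ell\in X$ independently with $\Pr[c_{i+1}^j=x]=\phi(x,C_i)/\phi(X,C_i)$, $\mathcal{R}$ selects $c_{i+1}$ among them, $C_{i+1}=C_i\cup\{c_{i+1}\}$. An optimal cluster $K$ is the set of points of $X$ whose closest center in a fixed optimal $k$-means solution is a given center; $\mu(K)$ is its centroid and $\phi^*(K)=\phi(K,\{\mu(K)\})$. $K$ is covered w.r.t. $C$ if $K\cap C\neq\emptyset$, solved w.r.t. $C$ if $\phi(K,C)\le10^5\phi^*(K)$. $\mathrm{HIT}(K)=\sum_{i=0}^{k-1}\sum_{j=1}^\ell \mathbf{1}[c_{i+1}^j\in K$ and $K$ is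 neither covered nor solved w.r.t. $C_i]$. *)

(* Defs.v *)
From HB Require Import structures.
From mathcomp Require Import all_boot all_order all_algebra.
From mathcomp Require Import all_classical all_reals all_analysis.
From mathcomp Require Import Rstruct.

Set Implicit Arguments.
Unset Strict Implicit.
Unset Printing Implicit Defensive.

Import Order.TTheory GRing.Theory Num.Theory.
Local Open Scope ring_scope.

Section KMeansPP.
Context {R : realType}.

Definition sqdist (d : nat) (x y : 'rV[R]_d) : R :=
  \sum_(i < d) (x ord0 i - y ord0 i) ^+ 2.

Definition phi (d : nat) (x : 'rV[R]_d) (C : seq 'rV[R]_d) : \bar R :=
  \big[Order.min/+oo%E]_(c <- C) (sqdist x c)%:E.

(* The finite point set X = { p i | i < n }, p injective. *)
Variables (d n : nat) (p : 'I_n -> 'rV[R]_d).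

Definition phiC (x : 'I_n) (C : {set 'I_n}) : \bar R :=
  phi (p x) [seq p c | c <- enum C].

Definition phiS (A : {set 'I_n}) (C : {set 'I_n}) : \bar R :=
  (\sum_(x in A) phiC x C)%E.

Definition centroid (A : {set 'I_n}) : 'rV[R]_d :=
  (#|A|%:R)^-1 *: \sum_(x in A) p x.

Definition phistar (A : {set 'I_n}) : R :=
  \sum_(x in A) sqdist (p x) (centroid A).

Definition covered (A C : {set 'I_n}) : bool := A :&: C != finset.set0.

Definition solved (A C : {set 'I_n}) : bool :=
  (phiS A C <= ((10 ^+ 5) * phistar A)%:E)%E.

(* Sampling probability of x given current centers C:
   uniform if C is empty; D^2-sampling phi(x,C)/phi(X,C) otherwise.
   (If phi(X,C) = 0, i.e. every point is already a center, the paper's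
   distribution is undefined; we fall back to uniform. All clusters are then
   covered, so this convention does not affect HIT.) *)
Definition weight (C : {set 'I_n}) (x : 'I_n) : R :=
  if C == finset.set0 then n%:R^-1
  else let tot := fine (phiS [set: 'I_n] C) in
       if tot == 0 then n%:R^-1 else fine (phiC x C) / tot.

Variable (k l : nat).

(* A rule: given (X, k, l fixed and) the current centers and the l candidates,
   selects one of the candidates (by its position j < l). *)
Definition rule_t := {set 'I_n} -> {ffun 'I_l -> 'I_n} -> 'I_l.

Variables (rule : rule_t) (K : {set 'I_n}).

Definition tupleprob (C : {set 'I_n}) (t : {ffun 'I_l -> 'I_n}) : R :=
  \prod_(j < l) weight C (t j).

(* contribution of one round to HIT(K) *)
Definition hits (C : {set 'I_n}) (t : {ffun 'I_l -> 'I_n}) : nat :=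
  if ~~ covered K C && ~~ solved K C then #|[set j | t j \in K]| else 0.

(* EHIT m C = expected contribution to HIT(K) of the remaining m rounds when
   the current set of centers is C. *)
Fixpoint EHIT (m : nat) (C : {set 'I_n}) : R :=
  match m with
  | 0 => 0
  | m'.+1 => \sum_(t : {ffun 'I_l -> 'I_n})
       tupleprob C t * ((hits C t)%:R + EHIT m' (C :|: [set t (rule C t)]))
  end.

Definition expected_HIT : R := EHIT k finset.set0.

End KMeansPP.

Section Optimal.
Context {R : realType}.
Variables (d n k : nat) (p : 'I_n -> 'rV[R]_d).

Definition centers (c : 'I_k -> 'rV[R]_d) : seq 'rV[R]_d := [seq c j | j <- enum 'I_k].

Definition kmeans_cost (c : 'I_k -> 'rV[R]_d) : \bar R :=
  (\sum_(x < n) phi (p x) (centers c))%E.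

Definition is_optimal (c : 'I_k -> 'rV[R]_d) : Prop :=
  forall c' : 'I_k -> 'rV[R]_d, (kmeans_cost c <= kmeans_cost c')%E.

Definition closest_assignment (c : 'I_k -> 'rV[R]_d) (a : 'I_n -> 'I_k) : Prop :=
  forall x, (sqdist (p x) (c (a x)))%:E = phi (p x) (centers c).

Definition opt_cluster (a : 'I_n -> 'I_k) (j : 'I_k) : {set 'I_n} :=
  [set x | a x == j].

End Optimal.

(* Main.v *)
Require Import Defs.
From HB Require Import structures.
From mathcomp Require Import all_boot all_order all_algebra.
From mathcomp Require Import all_classical all_reals all_analysis.
From mathcomp Require Import Rstruct.
From mathcomp Require Import ring lra.
Import Order.TTheory GRing.Theory Num.Theory.
Local Open Scope ring_scope.

Section Proof.
Context {R : realType}.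
Variables (d n : nat) (p : 'I_n -> 'rV[R]_d).

Lemma sqdist_ge0 (x y : 'rV[R]_d) : 0 <= sqdist x y.
Proof. by apply: sumr_ge0 => i _; apply: sqr_ge0. Qed.

Lemma phi_cases (x : 'rV[R]_d) (s : seq 'rV[R]_d) :
  s = [::] \/ exists2 r : R, 0 <= r & phi x s = r%:E.
Proof.
elim: s => [|a s IH]; first by left.
right; rewrite /phi big_cons -/(phi x s).
case: IH => [->|[r r0 ->]].
  rewrite /phi big_nil; exists (sqdist x a); first exact: sqdist_ge0.
  by rewrite minEle leey.
rewrite minEle; case: ifP => _.
  by exists (sqdist x a); first exact: sqdist_ge0.
by exists r.
Qed.

Lemma phiC_fin (x : 'I_n) (C : {set 'I_n}) : C != finset.set0 ->
  exists2 r : R, 0 <= r & phiC p x C = r%:E.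
Proof.
case/set0Pn => y yC; rewrite /phiC.
case: (phi_cases (p x) [seq p c | c <- enum C]) => // H.
have : p y \in [seq p c | c <- enum C] by apply: map_f; rewrite mem_enum.
by rewrite H.
Qed.

Lemma weight_ge0 C x : 0 <= weight p C x.
Proof.
rewrite /weight; case: ifPn => C0; first by rewrite invr_ge0 ler0n.
have fe y : phiC p y C = (fine (phiC p y C))%:E /\ 0 <= fine (phiC p y C).
  by case: (phiC_fin y C C0) => r r0 ->.
have tot : fine (phiS p [set: 'I_n] C) = \sum_(y in [set: 'I_n]) fine (phiC p y C).
  rewrite /phiS (eq_bigr (fun y => (fine (phiC p y C))%:E)); last by move=> y _; case: (fe y).
  by rewrite sumEFin.
case: ifPn => _; first by rewrite invr_ge0 ler0n.
apply: divr_ge0; first by case: (fe x).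
by rewrite tot; apply: sumr_ge0 => y _; case: (fe y).
Qed.

Lemma weight_sum C : \sum_x weight p C x <= 1.
Proof.
have unif : \sum_(x : 'I_n) (n%:R : R)^-1 <= 1.
  rewrite sumr_const card_ord -(mulr_natr (n%:R)^-1).
  have [n0|n0] := eqVneq (n%:R : R) 0; first by rewrite n0 invr0 mul0r ler01.
  by rewrite mulVf.
have [C0|C0] := eqVneq C finset.set0.
  by rewrite /weight C0 eqxx; exact: unif.
rewrite /weight (negbTE C0) /=.
have fe y : phiC p y C = (fine (phiC p y C))%:E /\ 0 <= fine (phiC p y C).
  by case: (phiC_fin y C C0) => r r0 ->.
have tot : fine (phiS p [set: 'I_n] C) = \sum_y fine (phiC p y C).
  rewrite /phiS (eq_bigr (fun y => (fine (phiC p y C))%:E)); last by move=> y _; case: (fe y).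
  by rewrite sumEFin /=; apply: eq_bigl => y; rewrite finset.in_setT.
have [t0|t0] := eqVneq (fine (phiS p [set: 'I_n] C)) 0.
  exact: unif.
by rewrite -mulr_suml -tot mulfV.
Qed.


Variables (l : nat) (rule : rule_t n l) (K : {set 'I_n}).

Let q C := \sum_(x in K) weight p C x.
Let P C (t : {ffun 'I_l -> 'I_n}) := tupleprob p C t.
Let allK (t : {ffun 'I_l -> 'I_n}) : R := \prod_j ((t j \in K)%:R).
Let cnt (t : {ffun 'I_l -> 'I_n}) : R := (#|[set j | t j \in K]|)%:R.

Lemma distr (F : 'I_l -> 'I_n -> R) :
  \sum_(t : {ffun 'I_l -> 'I_n}) \prod_j F j (t j) = \prod_j \sum_x F j x.
Proof. by rewrite bigA_distr_bigA. Qed.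

Lemma qE C : \sum_x weight p C x * (x \in K)%:R = q C.
Proof.
by rewrite /q [RHS]big_mkcond; apply: eq_bigr => x _; case: (x \in K); rewrite ?mulr1 ?mulr0.
Qed.

Lemma q_ge0 C : 0 <= q C.
Proof. by apply: sumr_ge0 => x _; exact: weight_ge0. Qed.

Lemma P_ge0 C t : 0 <= P C t.
Proof. by apply: prodr_ge0 => j _; exact: weight_ge0. Qed.

Lemma E_tot C : \sum_t P C t <= 1.
Proof.
rewrite /P /tupleprob (distr (fun _ x => weight p C x)) prodr_const.
apply: exprn_ile1; last exact: weight_sum.
by apply: sumr_ge0 => x _; exact: weight_ge0.
Qed.

Lemma E_all C : \sum_t P C t * allK t = q C ^+ l.
Proof.
rewrite (eq_bigr (fun t : {ffun 'I_l -> 'I_n} => \prod_j (weight p C (t j) * (t j \in K)%:R))); last first.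
  by move=> t _; rewrite /P /tupleprob /allK big_split.
by rewrite (distr (fun _ x => weight p C x * (x \in K)%:R)) prodr_const card_ord qE.
Qed.

Lemma E_cnt C : \sum_t P C t * cnt t <= l%:R * q C.
Proof.
have cntE t : cnt t = \sum_j ((t j \in K)%:R).
  rewrite /cnt -sum1_card natr_sum big_mkcond /=; apply: eq_bigr => j _.
  by rewrite inE; case: (t j \in K).
rewrite (eq_bigr (fun t : {ffun 'I_l -> 'I_n} => \sum_j P C t * (t j \in K)%:R)); last first.
  by move=> t _; rewrite cntE mulr_sumr.
have -> : l%:R * q C = \sum_(j < l) q C by rewrite sumr_const card_ord mulr_natl.
rewrite exchange_big /=.
apply: ler_sum => j _.
rewrite (eq_bigr (fun t : {ffun 'I_l -> 'I_n} => \prod_i (weight p C (t i) *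
     (if i == j then (t i \in K)%:R else 1)))); last first.
  move=> t _; rewrite /P /tupleprob big_split /=; congr (_ * _).
  by rewrite (bigD1 j) //= eqxx big1 ?mulr1 // => i /negbTE ->.
rewrite (distr (fun i x => weight p C x * (if i == j then (x \in K)%:R else 1))) (bigD1 j) //= (eq_bigr (fun x => weight p C x * (x \in K)%:R)); last first.
  by move=> x _; rewrite eqxx.
rewrite qE -[X in _ <= X]mulr1; apply: ler_wpM2l; first exact: q_ge0.
apply: prodr_ile1 => i /negbTE ->.
rewrite (eq_bigr (fun x => weight p C x)); last by move=> x _; rewrite mulr1.
rewrite weight_sum andbT; apply: sumr_ge0 => x _; exact: weight_ge0.
Qed.

Lemma coveredU C X : covered K (C :|: X) = covered K C || covered K X.
Proof. by rewrite /covered finset.setIUr finset.setU_eq0 negb_and. Qed.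

Lemma cov_step C (t : {ffun 'I_l -> 'I_n}) :
  ((~~ covered K (C :|: [set t (rule C t)]))%:R : R)
    <= (~~ covered K C)%:R * (1 - allK t).
Proof.
rewrite coveredU.
case: (boolP [forall j, t j \in K]) => [/forallP H|/forallPn [j Hj]].
  have -> : covered K [set t (rule C t)].
    by apply/set0Pn; exists (t (rule C t)); rewrite inE H set11.
  by rewrite orbT /= /allK big1 ?subrr ?mulr0 // => j _; rewrite H.
have -> : allK t = 0 by rewrite /allK (bigD1 j) //= (negbTE Hj) mul0r.
rewrite subr0 mulr1; case: (covered K C) => //=.
by case: (covered K [set _]).
Qed.

Lemma hits_le C (t : {ffun 'I_l -> 'I_n}) : ((hits p K C t)%:R : R) <= (~~ covered K C)%:R * cnt t.
Proof.
rewrite /hits /cnt; case: (covered K C) => /=; first by rewrite mul0r.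
by rewrite mul1r; case: (~~ solved p K C) => //=; rewrite ler0n.
Qed.

Variables (e B : R).
Hypotheses (e0 : 0 <= e) (B0 : 0 <= B) (key : forall x : R, 0 <= x -> x <= e + B * x ^+ l).

Lemma main m C : EHIT p rule K m C <= l%:R * (m%:R * e) + l%:R * B * (~~ covered K C)%:R.
Proof.
elim: m C => [|m IH] C /=.
  by rewrite mul0r mulr0 add0r; apply: mulr_ge0; [apply: mulr_ge0|]; rewrite ?ler0n.
set b : R := (~~ covered K C)%:R.
set c1 := l%:R * (m%:R * e). set c2 := l%:R * B * b.
have c10 : 0 <= c1 by apply: mulr_ge0 => //; apply: mulr_ge0.
have c20 : 0 <= c2 by apply: mulr_ge0; [apply: mulr_ge0|rewrite /b ler0n].
apply: (@le_trans _ _ (\sum_t P C t * (b * cnt t + (c1 + c2 * (1 - allK t))))).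
  apply: ler_sum => t _; apply: ler_wpM2l; first exact: P_ge0.
  apply: lerD; first exact: hits_le.
  apply: (le_trans (IH _)); rewrite lerD2l /c2 -mulrA.
  rewrite -!mulrA; apply: ler_wpM2l; first by rewrite ler0n.
  by apply: ler_wpM2l => //; exact: cov_step.
have -> : \sum_t P C t * (b * cnt t + (c1 + c2 * (1 - allK t))) =
   b * (\sum_t P C t * cnt t) + (c1 + c2) * (\sum_t P C t) - c2 * (\sum_t P C t * allK t).
  rewrite !mulr_sumr -big_split -sumrB /=; apply: eq_bigr => t _; ring.
rewrite E_all.
have X1 := E_cnt C. have X2 := E_tot C.
have X20 : 0 <= \sum_t P C t by apply: sumr_ge0 => t _; exact: P_ge0.
have X10 : 0 <= \sum_t P C t * cnt t.
  by apply: sumr_ge0 => t _; apply: mulr_ge0; [exact: P_ge0|rewrite ler0n].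
have kq := key _ (q_ge0 C).
have l0 : 0 <= (l%:R : R) by rewrite ler0n.
have S1 : c1 * (\sum_t P C t) <= c1.
  by rewrite -[X in _ <= X]mulr1; apply: ler_wpM2l.
have S2 : l%:R * B * (\sum_t P C t) <= l%:R * B.
  by rewrite -[X in _ <= X]mulr1; apply: ler_wpM2l => //; apply: mulr_ge0.
have le0 : 0 <= l%:R * e by apply: mulr_ge0.
have H2 : l%:R * q C <= l%:R * (e + B * q C ^+ l) by apply: ler_wpM2l.
rewrite -natr1 /c2 /b /c1 in S1 *; case: (covered K C) => /=.
  rewrite !mulr0 !mul0r !addr0 subr0; lra.
rewrite !mulr1 !mul1r; lra.
Qed.

End Proof.

Lemma key_ineq {R : realType} (k l' : nat) : (1 <= k)%N ->
  let B : R := k%:R `^ (1 - (l'.+1)%:R^-1) in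
  forall x : R, 0 <= x -> x <= B / k%:R + B * x ^+ l'.+1.
Proof.
move=> k1 B x x0.
have k0 : (0 : R) < k%:R by rewrite ltr0n.
have B0 : 0 <= B by apply: powR_ge0.
have Bl : B ^+ l'.+1 = k%:R ^+ l'.
  rewrite /B -powR_mulrn ?powR_ge0 // -powRrM.
  have -> : (1 - (l'.+1)%:R^-1) * (l'.+1)%:R = (l'%:R : R).
    by rewrite mulrBl mul1r mulVf ?pnatr_eq0 // -natr1 addrK.
  by rewrite powR_mulrn // ltW.
have e0 : 0 <= B / k%:R by apply: divr_ge0 => //; apply: ltW.
case: (lerP x (B / k%:R)) => h.
  have : 0 <= B * x ^+ l'.+1 by apply: mulr_ge0 => //; apply: exprn_ge0.
  lra.
have : (B / k%:R) ^+ l' <= x ^+ l'.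
  by apply: lerXn2r; rewrite ?inE // ltW.
move=> hx.
have one : B * (B / k%:R) ^+ l' = 1.
  rewrite exprMn exprVn mulrA -exprS Bl mulfV // expf_neq0 //.
  by rewrite lt0r_neq0.
have : x * (B * (B / k%:R) ^+ l') <= x * (B * x ^+ l').
  by apply: ler_wpM2l => //; apply: ler_wpM2l.
rewrite one mulr1 exprS mulrCA.
have : 0 <= B * x ^+ l'.+1 by apply: mulr_ge0 => //; apply: exprn_ge0.
rewrite exprS mulrCA; lra.
Qed.

Theorem lemmaB2 :
  exists alpha : Rdefinitions.R,
  forall (d n : nat) (p : 'I_n -> 'rV[Rdefinitions.R]_d), injective p ->
  forall (k l : nat), (2 <= k)%N -> (1 <= l)%N ->
  forall (rule : rule_t n l)
         (c : 'I_k -> 'rV[Rdefinitions.R]_d) (a : 'I_n -> 'I_k),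
  is_optimal p c -> closest_assignment p c a ->
  forall j : 'I_k,
  expected_HIT p k rule (opt_cluster a j)
    <= alpha * l%:R * (k%:R `^ (1 - l%:R^-1)).
Proof.
exists 2 => d n p _ k [//|l'] k2 _ rule c a _ _ j.
set B := k%:R `^ _.
have k0 : (0 : Rdefinitions.R) < k%:R by rewrite ltr0n; apply: leq_trans k2.
have B0 : 0 <= B by apply: powR_ge0.
have e0 : 0 <= B / k%:R by apply: divr_ge0 => //; apply: ltW.
have := main _ _ p _ rule (opt_cluster a j) _ _ e0 B0 (key_ineq _ l' (ltnW k2)) k finset.set0.
rewrite /expected_HIT => H; apply: (le_trans H).
have -> : covered (opt_cluster a j) finset.set0 = false.
  by rewrite /covered finset.setI0 eqxx.
rewrite /= mulr1 [k%:R * _]mulrC divfK ?lt0r_neq0 //.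
have : 0 <= (l'.+1%:R : Rdefinitions.R) * B by apply: mulr_ge0.
lra.
Qed.
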